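(* Let $K$ be a commutative unital ring, $k<n$ in $\mathbb{N}^*$, and $\bar a,\bar b=(b_1,\dots,b_k),\bar c=(c_1,\dots,c_k)\in K^k$. Put $d_i:=b_ic_i$ ($1\le i\le k$), $\bar d:=(d_1,\dots,d_k)$, $d:=d_1\cdots d_k$, $U(i):=U_i(\pi^{\bar a,-\bar d}(k,k),d)$ for $i\in\mathbb{N}$, and write $n=mk+r$ with $0\le r<k$ (so $m\ge1$). Then \[\det T^k_n(\bar a,\bar b,\bar c)=U(m)\,\alpha^{\bar a,-\bar d}(k+r,k)-d\,U(m-1)\,\alpha^{\bar a,-\bar d}(r,k)\] \[=U(m+1)\,\alpha^{\bar a,-\bar d}(r,k)+d_kd_1\cdots d_r\,U(m)\,\alpha^{\bar a,-\bar d}_{r+1}(k-r-2,k).\] In particular, if $r=k-1$ then $\det T^k_{mk+k-1}(\bar a,\bar b,\bar c)=U(m+1)\,\det T^k_{k-1}(\bar a,\bar b,\bar c)=U(m+1)\alpha^{\bar a,-\bar d}(k-1,k)$.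
   Context: Vectors in $K^k$ are extended periodically ($a_{i+k}:=a_i$), $-\bar d$ componentwise. $T^k_n(\bar a,\bar b,\bar c)\in M_n(K)$ is the tridiagonal matrix with diagonal $a_1,\dots,a_n$, superdiagonal $b_1,\dots,b_{n-1}$, subdiagonal $c_1,\dots,c_{n-1}$, zeros elsewhere. $U_m(x,y):=\sum_{i=0}^{\lfloor (m-1)/2\rfloor}(-1)^i\binom{m-1-i}{i}x^{m-1-2i}y^i$ (so $U_0=0$, $U_1=1$). In $P=\mathbb{Z}[x_1,\dots,x_k,y_1,\dots,y_k]$, indices are periodic ($x_{i+k}:=x_i$, $y_{i+k}:=y_i$); shift $f_s:=f(x_{s+1},\dots,x_{s+k},y_{s+1},\dots,y_{s+k})$; for $\bar a,\bar e\in K^k$, $f^{\bar a,\bar e}$ is the image of $f$ under $x_i\mapsto a_i$, $y_i\mapsto e_i$, and $f_s^{\bar a,\bar e}:=(f_s)^{\bar a,\bar e}$. Write $[r]=\{1,\dots,r\}$, $S+1=\{s+1:s\in S\}$. For $0\le r\le k$, $\alpha(r,k):=\sum_{S}\prod_{i\in S}y_i\prod_{j\in[r]\setminus(S\cup(S+1))}x_j$ over subsets $S\subseteq\{1,\dots,r-1\}$ with no two consecutive integers; $\alpha(-1,k):=0$; for $r>k$, $\alpha(r,k):=x_r\alpha(r-1,k)+y_{r-1}\alpha(r-2,k)$; $\alpha_s(r,k):=(\alpha(r,k))_s$. $\beta(0,k)=\beta(1,k):=0$ and for $2\le r\le k+1$, $\beta(r,k):=\sum_S y_k\prod_{i\in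 S}y_i\prod_{j\in\{2,\dots,r-1\}\setminus(S\cup(S+1))}x_j$ over $S\subseteq\{2,\dots,r-2\}$ with no two consecutive integers. $\pi(r,k):=\alpha(r,k)+\beta(r,k)$ for $0\le r\le k$. *)

(* Defs.v *)
From HB Require Import structures.
From mathcomp Require Import all_boot all_order all_algebra.
Set Implicit Arguments. Unset Strict Implicit. Unset Printing Implicit Defensive.
Import Order.TTheory GRing.Theory Num.Theory.
Local Open Scope ring_scope.

Section Defs.
Variable K : comPzRingType.

(* periodic extension of a vector (a_1,...,a_k), 1-indexed: a_i := a_{((i-1) mod k) + 1} *)
Definition per (k : nat) (a : k.-tuple K) (i : nat) : K := nth 0 (val a) ((i.-1) %% k).

Definition memn (N : nat) (S : {set 'I_N}) (j : nat) : bool :=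
  [exists i in S, (val i == j)].

Definition nocons (N : nat) (S : {set 'I_N}) : bool :=
  [forall i in S, forall j in S, val j != (val i).+1].

(* alpha(r,k) for 0 <= r <= k, evaluated at x_i |-> x i, y_i |-> y i:
   sum over S subset of {1..r-1}, no two consecutive, of
   prod_{i in S} y_i * prod_{j in [r] \ (S u (S+1))} x_j *)
Definition alpha_base (x y : nat -> K) (r : nat) : K :=
  \sum_(S : {set 'I_r.+1} | [forall i in S, (0 < val i < r)%N] && nocons S)
     (\prod_(i in S) y (val i)) *
     \prod_(1 <= j < r.+1 | ~~ memn S j && ~~ memn S j.-1) x j.

Definition beta_base (x y : nat -> K) (k r : nat) : K :=
  if (r < 2)%N then 0 else
  \sum_(S : {set 'I_r.+1} | [forall i in S, (2 <= val i < r.-1)%N] && nocons S)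
     y k * (\prod_(i in S) y (val i)) *
     \prod_(2 <= j < r | ~~ memn S j && ~~ memn S j.-1) x j.

(* alpha_pair r = (alpha(r,k), alpha(r-1,k)), with alpha(-1,k) = 0, and the
   recursion alpha(r,k) = x_r alpha(r-1,k) + y_{r-1} alpha(r-2,k) for r > k *)
Fixpoint alpha_pair (x y : nat -> K) (k r : nat) : K * K :=
  match r with
  | 0 => (alpha_base x y 0, 0)
  | r'.+1 =>
      if (r'.+1 <= k)%N then (alpha_base x y r'.+1, alpha_base x y r')
      else let p := alpha_pair x y k r' in (x r'.+1 * p.1 + y r' * p.2, p.1)
  end.

Definition alpha (x y : nat -> K) (k r : nat) : K := (alpha_pair x y k r).1.
(* alpham1 k n = alpha(n-1,k) for n >= 0 (so alpham1 k 0 = alpha(-1,k) = 0) *)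
Definition alpham1 (x y : nat -> K) (k n : nat) : K := (alpha_pair x y k n).2.

Definition pi_ (x y : nat -> K) (k r : nat) : K := alpha x y k r + beta_base x y k r.

(* shifted sequence: used for f_s (x_i |-> x_{s+i}) *)
Definition shiftn (x : nat -> K) (s : nat) : nat -> K := fun i => x (s + i)%N.

Definition Ucheb (m : nat) (x y : K) : K :=
  if m is 0 then 0 else
  \sum_(i < (m.-1)./2.+1)
     (-1) ^+ i * ('C(m.-1 - i, i))%:R * x ^+ (m.-1 - i.*2) * y ^+ i.

Definition Tmat (k : nat) (a b c : k.-tuple K) (n : nat) : 'M[K]_n :=
  \matrix_(i < n, j < n)
    if val i == val j then per a (val i).+1
    else if val j == (val i).+1 then per b (val i).+1
    else if val i == (val j).+1 then per c (val j).+1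
    else 0.

End Defs.

(* Main.v *)
Require Import Defs.
From HB Require Import structures.
From mathcomp Require Import all_boot all_order all_algebra.
From mathcomp Require Import ring zify.
From Stdlib Require Import FunctionalExtensionality.
Set Implicit Arguments. Unset Strict Implicit. Unset Printing Implicit Defensive.
Import Order.TTheory GRing.Theory Num.Theory.
Local Open Scope ring_scope.

Section Seqs.
Variable K : comPzRingType.

Fixpoint sp (X Y : nat -> K) (f0 f1 : K) (n : nat) : K * K :=
  match n with
  | 0 => (f0, f1)
  | n'.+1 => let p := sp X Y f0 f1 n' in (p.2, X n' * p.2 + Y n' * p.1)
  end.
Definition sol X Y f0 f1 n := (sp X Y f0 f1 n).1.

Definition isSol (X Y : nat -> K) (f : nat -> K) :=
  forall n, f n.+2 = X n * f n.+1 + Y n * f n.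

Lemma sol_isSol X Y f0 f1 : isSol X Y (sol X Y f0 f1).
Proof. by move=> n; rewrite /sol /=. Qed.

Lemma sol0 X Y f0 f1 : sol X Y f0 f1 0 = f0. Proof. by []. Qed.
Lemma sol1 X Y f0 f1 : sol X Y f0 f1 1 = f1. Proof. by []. Qed.

Lemma decomp X Y f : isSol X Y f ->
  forall n, f n = f 1%N * sol X Y 0 1 n + f 0%N * sol X Y 1 0 n.
Proof.
move=> Hf n.
suff: f n = f 1%N * sol X Y 0 1 n + f 0%N * sol X Y 1 0 n /\
      f n.+1 = f 1%N * sol X Y 0 1 n.+1 + f 0%N * sol X Y 1 0 n.+1 by case.
elim: n => [|n [IH1 IH2]]; first by rewrite /sol /=; split; ring.
split=> //.
by rewrite Hf !sol_isSol IH1 IH2; ring.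
Qed.

Lemma shift_isSol X Y f s : isSol X Y f ->
  isSol (fun j => X (s + j)%N) (fun j => Y (s + j)%N) (fun j => f (s + j)%N).
Proof. by move=> Hf j; rewrite !addnS Hf. Qed.

Lemma periodic_isSol X Y f k : isSol X Y f ->
  (forall n, X (n + k)%N = X n) -> (forall n, Y (n + k)%N = Y n) ->
  isSol X Y (fun j => f (j + k)%N).
Proof. by move=> Hf HX HY j; rewrite /= !addSn Hf HX HY. Qed.

Lemma lin_isSol X Y f g (u v : K) : isSol X Y f -> isSol X Y g ->
  isSol X Y (fun j => u * f j + v * g j).
Proof. by move=> Hf Hg j; rewrite Hf Hg; ring. Qed.

Section AB.
Variables X Y : nat -> K.
Let A := sol X Y 0 1.
Let B := sol X Y 1 0.
Definition Cas n := A n.+1 * B n - A n * B n.+1.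

Lemma Cas_prod n : Cas n = \prod_(0 <= i < n) (- Y i).
Proof.
elim: n => [|n IH]; first by rewrite big_geq // /Cas /A /B /sol /=; ring.
rewrite big_nat_recr //= -IH /Cas /A /B !sol_isSol; ring.
Qed.

Lemma Wron n j :
  A (n + j)%N * B n - B (n + j)%N * A n =
  Cas n * sol (fun j => X (n + j)%N) (fun j => Y (n + j)%N) 0 1 j.
Proof.
have Hs : isSol X Y (fun m => B n * A m + (- A n) * B m).
  by apply: lin_isSol; apply: sol_isSol.
have E := decomp (shift_isSol n Hs) j; rewrite /= in E.
transitivity (B n * A (n + j)%N + - A n * B (n + j)%N); first ring.
rewrite E addn0 addn1 /Cas.
have -> : B n * A n + - A n * B n = 0 by ring.
ring.
Qed.

Variable k : nat.
Hypothesis HX : forall n, X (n + k)%N = X n.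
Hypothesis HY : forall n, Y (n + k)%N = Y n.

Lemma shiftk_A n : A (n + k)%N = A k.+1 * A n + A k * B n.
Proof.
rewrite /A /B; have := decomp (periodic_isSol (sol_isSol X Y 0 1) HX HY) n => /= ->.
by rewrite add1n add0n.
Qed.
Lemma shiftk_B n : B (n + k)%N = B k.+1 * A n + B k * B n.
Proof.
rewrite /A /B; have := decomp (periodic_isSol (sol_isSol X Y 1 0) HX HY) n => /= ->.
by rewrite add1n add0n.
Qed.

Lemma main_id n : A (n + k + k)%N = (A k.+1 + B k) * A (n + k)%N - Cas k * A n.
Proof.
rewrite shiftk_A !shiftk_A shiftk_B /Cas; ring.
Qed.

End AB.

Definition Fc (t d : K) (m i : nat) : K :=
  (-1) ^+ i * ('C(m - i, i))%:R * t ^+ (m - i.*2) * d ^+ i.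

Lemma Ucheb_Fc (t d : K) m : Ucheb m.+1 t d = \sum_(i < m.+1) Fc t d m i.
Proof.
rewrite /Ucheb /=.
have Hle : (m./2.+1 <= m.+1)%N by rewrite ltnS leq_half_double; lia.
rewrite (big_ord_widen _ (fun i => Fc t d m i) Hle) big_mkcond /=.
apply: eq_bigr => i _; case: ifP => // /negbT; rewrite -leqNgt => Hi.
rewrite /Fc bin_small ?mulr0 ?mul0r //.
move: Hi; rewrite ltn_half_double => Hi; lia.
Qed.

Lemma Ucheb_0 t d : Ucheb 0 t d = 0 :> K. Proof. by []. Qed.
Lemma Ucheb_1 t d : Ucheb 1 t d = 1 :> K.
Proof. by rewrite Ucheb_Fc big_ord1 /Fc /= bin0 expr0 !mulr1. Qed.

Lemma Fc_rec t d m i : Fc t d m.+2 i.+1 = t * Fc t d m.+1 i.+1 - d * Fc t d m i.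
Proof.
rewrite /Fc.
case: (leqP i m) => Him; last first.
  rewrite (@bin_small (m.+2 - i.+1)) ?(@bin_small (m.+1 - i.+1)) ?(@bin_small (m - i)); try lia.
  rewrite !mulr0 !mul0r; ring.
have e1 : (m.+2 - i.+1 = (m - i).+1)%N by lia.
have e2 : (m.+1 - i.+1 = m - i)%N by lia.
have e3 : (m.+2 - (i.+1).*2 = m - i.*2)%N by rewrite doubleS; lia.
rewrite e1 e2 e3 binS natrD.
case: (leqP (i.*2.+1) m) => Hm.
  have e4 : (m - i.*2 = (m.+1 - (i.+1).*2).+1)%N by rewrite doubleS; lia.
  rewrite e4 !exprS; ring.
rewrite (@bin_small (m - i) i.+1); last lia.
rewrite !exprS; ring.
Qed.

Lemma Ucheb_rec t d m : Ucheb m.+3 t d = t * Ucheb m.+2 t d - d * Ucheb m.+1 t d :> K.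
Proof.
rewrite !Ucheb_Fc big_ord_recl.
rewrite (eq_bigr (fun i : 'I_m.+2 => t * Fc t d m.+1 i.+1 - d * Fc t d m i)); last first.
  by move=> i _; rewrite Fc_rec.
rewrite sumrB -mulr_sumr -mulr_sumr.
rewrite (big_ord_recl m.+1 (fun i => Fc t d m.+1 i)) (big_ord_recr m.+1 (fun i => Fc t d m i)) /=.
have -> : Fc t d m m.+1 = 0 by rewrite /Fc bin_small ?mulr0 ?mul0r //; lia.
have F0 : forall m', Fc t d m' 0 = t ^+ m' by move=> m'; rewrite /Fc /= !subn0 bin0 !expr0 !mulr1 mul1r.
rewrite !F0 exprS addr0.
rewrite (big_ord_recr m.+1 (fun i => Fc t d m.+1 i.+1)) /=.
have -> : Fc t d m.+1 m.+2 = 0 by rewrite /Fc bin_small ?mulr0 ?mul0r //; lia.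
rewrite addr0.
have -> : \sum_(i < m.+1) Fc t d m.+1 (bump 0 i) = \sum_(i < m.+1) Fc t d m.+1 i.+1 by [].
ring.
Qed.

Lemma Ucheb_2 (t d : K) : Ucheb 2 t d = t.
Proof. by rewrite Ucheb_Fc big_ord_recr big_ord1 /Fc /= bin0 bin_small // !mulr0 !mul0r addr0 !mulr1 mul1r. Qed.

Lemma Ucheb_rec2 (t d : K) m : Ucheb m.+2 t d = t * Ucheb m.+1 t d - d * Ucheb m t d.
Proof. case: m => [|m]; last exact: Ucheb_rec.
by rewrite Ucheb_2 Ucheb_1 Ucheb_0; ring. Qed.

Lemma cheb (t d : K) (s : nat -> K) : (forall j, s j.+2 = t * s j.+1 - d * s j) ->
  forall m, s m.+1 = Ucheb m.+1 t d * s 1%N - d * Ucheb m t d * s 0%N.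
Proof.
move=> Hs m.
suff: s m.+1 = Ucheb m.+1 t d * s 1%N - d * Ucheb m t d * s 0%N /\
      s m.+2 = Ucheb m.+2 t d * s 1%N - d * Ucheb m.+1 t d * s 0%N by case.
elim: m => [|m [IH1 IH2]].
  rewrite Ucheb_1 Ucheb_0 Hs Ucheb_2; split; ring.
split=> //; rewrite Hs IH1 IH2 (Ucheb_rec t d m) (Ucheb_rec2 t d m); ring.
Qed.

End Seqs.

Section Sets.

Lemma memn_val N (S : {set 'I_N}) (i : 'I_N) : memn S i = (i \in S).
Proof.
rewrite /memn; apply/existsP/idP => [[j /andP [Hj /eqP e]] | Hi].
  by have -> : i = j by apply: val_inj.
by exists i; rewrite Hi eqxx.
Qed.

Lemma memn_lt N (S : {set 'I_N}) j : memn S j -> (j < N)%N.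
Proof. by rewrite /memn => /existsP [i /andP [_ /eqP <-]]; exact: ltn_ord. Qed.

Lemma memn_setE (M : nat) (p : nat -> bool) j :
  memn [set i : 'I_M | p (nat_of_ord i)] j = p j && (j < M)%N.
Proof.
rewrite /memn; apply/existsP/idP => [[i /andP [Hi /eqP <-]] | /andP [Hp Hj]].
  by rewrite inE in Hi; rewrite Hi ltn_ord.
by exists (Ordinal Hj); rewrite inE /= Hp eqxx.
Qed.

Lemma memn_inj N (S S' : {set 'I_N}) : (forall j, memn S j = memn S' j) -> S = S'.
Proof. by move=> H; apply/setP => i; rewrite -!memn_val H. Qed.

Definition wid N (T : {set 'I_N}) : {set 'I_N.+1} := [set j : 'I_N.+1 | memn T j].
Definition addT N (T : {set 'I_N}) : {set 'I_N.+1} :=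
  [set j : 'I_N.+1 | (nat_of_ord j == N) || memn T j].
Definition unwid N (S : {set 'I_N.+1}) : {set 'I_N} := [set i : 'I_N | memn S i].

Lemma memn_wid N (T : {set 'I_N}) j : memn (wid T) j = memn T j.
Proof.
rewrite /wid (memn_setE _ (memn T)); case H: (memn T j) => //=.
by have := memn_lt H; lia.
Qed.

Lemma memn_addT N (T : {set 'I_N}) j : memn (addT T) j = (j == N) || memn T j.
Proof.
rewrite /addT (memn_setE _ (fun i => (i == N) || memn T i)); case: eqP => [-> |_] /=; first by rewrite ?eqxx ?ltnSn.
case H: (memn T j) => //=; have := memn_lt H; lia.
Qed.

Lemma memn_unwid N (S : {set 'I_N.+1}) j : memn (unwid S) j = memn S j && (j < N)%N.
Proof. by rewrite /unwid (memn_setE _ (memn S)). Qed.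

Lemma split_sum (K : nmodType) N (Phi : (nat -> bool) -> K) :
  \sum_(S : {set 'I_N.+1}) Phi (memn S) =
  \sum_(T : {set 'I_N}) (Phi (memn T) + Phi (fun j => (j == N) || memn T j)).
Proof.
rewrite (bigID (fun S : {set 'I_N.+1} => ord_max \in S)) /= addrC big_split /=.
have Hom : forall S : {set 'I_N.+1}, memn S N = (ord_max \in S).
  by move=> S; rewrite -memn_val.
congr (_ + _).
  rewrite (reindex_onto (@wid N) (@unwid N)) /=; last first.
    move=> S HS; apply: memn_inj => j.
    rewrite memn_wid memn_unwid; case H: (memn S j) => //=.
    have := memn_lt H; case: (ltnP j N) => // Hj Hj2.
    have ej : j = N by lia.
    by rewrite ej Hom in H; rewrite H in HS.
  apply: eq_big => T.
    rewrite -Hom memn_wid.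
    case H: (memn T N); first by have := memn_lt H; rewrite ltnn.
    apply/eqP; apply: memn_inj => j; rewrite memn_unwid memn_wid.
    by case H2: (memn T j) => //=; apply: memn_lt H2.
  move=> _; congr Phi; apply: functional_extensionality => j.
  by rewrite memn_wid.
rewrite (reindex_onto (@addT N) (@unwid N)) /=; last first.
  move=> S HS; apply: memn_inj => j.
  rewrite memn_addT memn_unwid; case: eqP => [-> |]; first by rewrite Hom.
  move=> Hne; case H: (memn S j) => //=.
  have := memn_lt H; lia.
apply: eq_big => T.
  rewrite -Hom memn_addT eqxx /=.
  apply/eqP; apply: memn_inj => j; rewrite memn_unwid memn_addT.
  case: eqP => [-> | _] /=; first by rewrite ltnn; case H: (memn T N) => //; have := memn_lt H; rewrite ltnn.
  by case H2: (memn T j) => //=; apply: memn_lt H2.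
move=> _; congr Phi; apply: functional_extensionality => j.
by rewrite memn_addT.
Qed.

End Sets.

Section GS.
Variable K : comPzRingType.
Variables x y : nat -> K.

Definition G (l N h : nat) : K :=
  \sum_(S : {set 'I_N} | [forall i in S, (l <= val i < h)%N] && nocons S)
     (\prod_(i in S) y (val i)) *
     \prod_(l <= j < h.+1 | ~~ memn S j && ~~ memn S j.-1) x j.

Lemma alpha_base_G r : alpha_base x y r = G 1 r.+1 r.
Proof. by []. Qed.

Definition Phi (l h N : nat) (p : nat -> bool) : K :=
  if [forall j : 'I_N, p j ==> (l <= j < h)%N] && [forall j : 'I_N, p j ==> ~~ p j.+1]
  then (\prod_(0 <= j < N | p j) y j) * \prod_(l <= j < h.+1 | ~~ p j && ~~ p j.-1) x j
  else 0.

Lemma forallP_supp N (p Q : nat -> bool) : (forall j, (N <= j)%N -> p j = false) ->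
  reflect (forall j, p j -> Q j) [forall j : 'I_N, p j ==> Q j].
Proof.
move=> Hs; apply: (iffP forallP) => H j.
  move=> Hp; case: (ltnP j N) => Hj; first exact: (implyP (H (Ordinal Hj)) Hp).
  by rewrite Hs in Hp.
by apply/implyP; apply: H.
Qed.

Lemma supp_memn N (S : {set 'I_N}) j : (N <= j)%N -> memn S j = false.
Proof. by move=> Hj; apply/negbTE/negP => /memn_lt; lia. Qed.

Lemma G_Phi l N h : G l N h = \sum_(S : {set 'I_N}) Phi l h N (memn S).
Proof.
rewrite /G big_mkcond; apply: eq_bigr => S _; rewrite /Phi.
have -> : [forall i in S, (l <= val i < h)%N] = [forall j : 'I_N, memn S j ==> (l <= j < h)%N].
  by apply: eq_forallb => j; rewrite memn_val.
have -> : nocons S = [forall j : 'I_N, memn S j ==> ~~ memn S j.+1].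
  rewrite /nocons; apply: eq_forallb => i; rewrite memn_val.
  case: (i \in S) => //=.
  rewrite /memn negb_exists; apply: eq_forallb => j.
  by case: (j \in S).
case: ifP => // _; congr (_ * _).
by rewrite big_mkord; apply: eq_bigl => j; rewrite memn_val.
Qed.

Lemma Phi_ext l h N N' p : (N <= N')%N -> (forall j, (N <= j)%N -> p j = false) ->
  Phi l h N' p = Phi l h N p.
Proof.
move=> HN Hs.
have Hs' : forall j, (N' <= j)%N -> p j = false by move=> j Hj; apply: Hs; lia.
rewrite /Phi.
have E : forall Q : nat -> bool, [forall j : 'I_N', p j ==> Q j] = [forall j : 'I_N, p j ==> Q j].
  by move=> Q; apply/(@forallP_supp N' p Q Hs')/(@forallP_supp N p Q Hs).
rewrite (E (fun j => (l <= j < h)%N)) (E (fun j => ~~ p j.+1)); case: ifP => // _; congr (_ * _).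
rewrite (@big_cat_nat _ _ _ N 0 N' _ _ (leq0n N) HN) /= [X in _ * X]big1_seq ?mulr1 //.
by move=> j /andP [Hp]; rewrite mem_index_iota => /andP [Hj _]; rewrite Hs in Hp.
Qed.

Lemma G_down l N h : (h <= N)%N -> G l N.+1 h = G l N h.
Proof.
move=> HhN; rewrite !G_Phi split_sum; apply: eq_bigr => T _.
have HsT : forall j, (N <= j)%N -> memn T j = false by move=> j; apply: supp_memn.
have -> : Phi l h N.+1 (fun j => (j == N) || memn T j) = 0.
  rewrite /Phi; case: ifP => // /andP [H _].
  have Hs : forall j, (N.+1 <= j)%N -> ((j == N) || memn T j) = false.
    by move=> j Hj; rewrite HsT; [case: eqP => //; lia | lia].
  have := (@forallP_supp N.+1 _ (fun j => (l <= j < h)%N) Hs) H N.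
  by rewrite eqxx => /(_ isT); lia.
by rewrite addr0 (Phi_ext _ _ (leqnSn N) HsT).
Qed.

Lemma G_rec l h : (l <= h.+1)%N ->
  G l h.+2 h.+2 = x h.+2 * G l h.+1 h.+1 + y h.+1 * G l h.+1 h.
Proof.
move=> Hl; rewrite !G_Phi split_sum big_split !mulr_sumr; congr (_ + _); apply: eq_bigr => T _.
  have HsT : forall j, (h.+1 <= j)%N -> memn T j = false by move=> j; apply: supp_memn.
  rewrite (Phi_ext _ _ (leqnSn h.+1) HsT) /Phi.
  have -> : [forall j : 'I_h.+1, memn T j ==> (l <= j < h.+2)%N] =
            [forall j : 'I_h.+1, memn T j ==> (l <= j < h.+1)%N].
    by apply: eq_forallb => j; rewrite (leqW (ltn_ord j)) (ltn_ord j).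
  case: ifP => _; last by rewrite mulr0.
  rewrite [X in _ * X = _]big_mkcond [X in _ = _ * (_ * X)]big_mkcond.
  rewrite [X in _ * X = _]big_nat_recr /=; last lia.
  rewrite !HsT //=; ring.
set q := fun j => (j == h.+1) || memn T j.
have sp : forall j, (h.+1 <= j)%N -> memn T j = false by move=> j; apply: supp_memn.
have sq : forall j, (h.+2 <= j)%N -> q j = false.
  by move=> j Hj; rewrite /q sp; [case: eqP => //; lia | lia].
rewrite /Phi.
have -> : [forall j : 'I_h.+2, q j ==> (l <= j < h.+2)%N] && [forall j : 'I_h.+2, q j ==> ~~ q j.+1]
  = [forall j : 'I_h.+1, memn T j ==> (l <= j < h)%N] && [forall j : 'I_h.+1, memn T j ==> ~~ memn T j.+1].
  apply/andP/andP => [[/(@forallP_supp _ _ (fun j => (l <= j < h.+2)%N) sq) H1 /(@forallP_supp _ _ (fun j => ~~ q j.+1) sq) H2] | [/(@forallP_supp _ _ (fun j => (l <= j < h)%N) sp) H1 /(@forallP_supp _ _ (fun j => ~~ memn T j.+1) sp) H2]]; split.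
  - apply/(@forallP_supp _ _ (fun j => (l <= j < h)%N) sp) => j Pj.
    have Qj : q j by rewrite /q Pj orbT.
    have jle := memn_lt Pj.
    case: (eqVneq j h) => [ej|nej].
      by have := H2 j Qj; rewrite /q ej eqxx.
    have := H1 j Qj; move: nej => /eqP; lia.
  - apply/(@forallP_supp _ _ (fun j => ~~ memn T j.+1) sp) => j Pj.
    have Qj : q j by rewrite /q Pj orbT.
    by have := H2 j Qj; rewrite /q negb_or => /andP [].
  - apply/(@forallP_supp _ _ (fun j => (l <= j < h.+2)%N) sq) => j /orP [/eqP -> | Pj]; first lia.
    by have := H1 j Pj; lia.
  - apply/(@forallP_supp _ _ (fun j => ~~ q j.+1) sq) => j /orP [/eqP -> | Pj].
      by rewrite /q sp // orbF; apply/eqP; lia.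
    have := H1 j Pj => /andP [_ Hjh].
    rewrite /q negb_or H2 // andbT; apply/eqP; lia.
case: ifP => _; last by rewrite mulr0.
have Ey : \prod_(0 <= j < h.+2 | q j) y j = y h.+1 * \prod_(0 <= j < h.+1 | memn T j) y j.
  rewrite big_mkcond big_nat_recr //= {2}/q eqxx /= mulrC; congr (_ * _).
  rewrite [RHS]big_mkcond; apply: eq_big_nat => j /andP [_ Hj].
  by rewrite /q (_ : (j == h.+1) = false) //; apply/eqP; lia.
have Ex : \prod_(l <= j < h.+3 | ~~ q j && ~~ q j.-1) x j =
          \prod_(l <= j < h.+1 | ~~ memn T j && ~~ memn T j.-1) x j.
  rewrite big_mkcond big_nat_recr /=; last lia.
  rewrite big_nat_recr /=; last lia.
  have Qh : q h.+1 by rewrite /q eqxx.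
  rewrite Qh /= andbF !mulr1.
  rewrite [RHS]big_mkcond; apply: eq_big_nat => j /andP [_ Hj].
  rewrite /q (_ : (j == h.+1) = false); last by apply/eqP; lia.
  by rewrite (_ : (j.-1 == h.+1) = false) //; apply/eqP; lia.
rewrite Ey Ex; ring.
Qed.


Lemma memn0 N j : memn (set0 : {set 'I_N}) j = false.
Proof. by rewrite /memn; apply/existsP => [[i]]; rewrite inE. Qed.

Lemma G_small l N h : (h <= l)%N -> G l N h = \prod_(l <= j < h.+1) x j.
Proof.
move=> Hhl; rewrite /G (big_pred1 set0); last first.
  move=> S /=; apply/andP/eqP => [[H _] | ->].
    apply/setP => i; rewrite inE; apply/negbTE/negP => Hi.
    by have := forallP H i; rewrite Hi /=; lia.
  by split; apply/forallP => i; rewrite inE.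
rewrite big_set0 mul1r; apply: eq_bigl => j; by rewrite !memn0.
Qed.

Definition g l h := G l h.+1 h.

Lemma g_rec l h : (l <= h.+1)%N -> g l h.+2 = x h.+2 * g l h.+1 + y h.+1 * g l h.
Proof. by move=> Hl; rewrite /g (G_down l (leqnn h.+2)) (G_rec Hl) (G_down l (leqnn h.+1)). Qed.

Lemma g_base0 l : (0 < l)%N -> g l l.-1 = 1.
Proof. by move=> Hl; rewrite /g G_small ?leq_pred // prednK // big_geq. Qed.

Lemma g_base1 l : g l l = x l.
Proof. by rewrite /g G_small // big_nat1. Qed.

End GS.

Section Link.
Variable K : comPzRingType.
Variables x y X Y : nat -> K.
Hypothesis HX : forall n, X n = x n.+1.

Lemma g1_link : (forall n, (0 < n)%N -> Y n = y n) ->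
  forall h, g x y 1 h = sol X Y 0 1 h.+1.
Proof.
move=> HY h.
suff: g x y 1 h = sol X Y 0 1 h.+1 /\ g x y 1 h.+1 = sol X Y 0 1 h.+2 by case.
elim: h => [|h [IH1 IH2]].
  rewrite (g_base0 x y (isT : (0 < 1)%N)) g_base1 sol_isSol HX /sol /=; split=> //; ring.
split=> //; rewrite g_rec // sol_isSol IH1 IH2 HX HY //.
Qed.

Lemma alpha_link k : (forall n, (0 < n)%N -> Y n = y n) ->
  forall r, alpha_pair x y k r = (sol X Y 0 1 r.+1, sol X Y 0 1 r).
Proof.
move=> HY; elim=> [|r IH].
  by rewrite /= alpha_base_G -/(g x y 1 0) g1_link.
rewrite /=; case: ifP => _.
  by rewrite !alpha_base_G -/(g x y 1 r.+1) -/(g x y 1 r) !g1_link.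
rewrite IH /= (sol_isSol X Y 0 1 r) HX; congr (_, _); congr (_ + _).
case: r {IH} => [|r]; first by rewrite /sol /= !mulr0.
by rewrite HY.
Qed.

Lemma beta_link k : Y 0%N = y k -> (forall n, (0 < n)%N -> Y n = y n) ->
  forall r, (0 < r)%N -> beta_base x y k r = sol X Y 1 0 r.
Proof.
move=> HY0 HY [|[|r]] // _.
have E : beta_base x y k r.+2 = y k * g x y 2 r.+1.
  rewrite /beta_base /= /g -(G_down x y 2 (leqnSn r.+1)) /G big_distrr /=.
  by apply: eq_bigr => S _; rewrite mulrA.
rewrite E; clear E.
suff: sol X Y 1 0 r.+2 = y k * g x y 2 r.+1 /\ sol X Y 1 0 r.+3 = y k * g x y 2 r.+2
  by case=> ->.
elim: r => [|r [IH1 IH2]].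
  rewrite (g_base0 x y (isT : (0 < 2)%N)) g_base1 !sol_isSol !HX HY0 HY // /sol /=.
  split; ring.
split=> //; rewrite sol_isSol IH1 IH2 HX HY // (@g_rec _ x y 2 r.+1) //; ring.
Qed.

End Link.

Section Det.
Variable K : comPzRingType.
Variable k : nat.
Variables a b c : k.-tuple K.

Lemma per_period (v : k.-tuple K) n : (0 < n)%N -> per v (n + k) = per v n.
Proof.
by move=> Hn; rewrite /per (_ : (n + k).-1 = n.-1 + k)%N ?modnDr //; lia.
Qed.

Lemma val_lift_max m (i : 'I_m) : val (lift ord_max i) = val i.
Proof. exact: lift_max. Qed.
Lemma val_lift m (i0 : 'I_m.+1) (j : 'I_m) : val (lift i0 j) = bump i0 j.
Proof. by []. Qed.

Lemma det_T0 : \det (Tmat a b c 0) = 1.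
Proof. exact: det_mx00. Qed.

Lemma det_T1 : \det (Tmat a b c 1) = per a 1.
Proof. by rewrite det_mx11 mxE. Qed.

Lemma det_Trec n : \det (Tmat a b c n.+2) =
  per a n.+2 * \det (Tmat a b c n.+1) - per b n.+1 * per c n.+1 * \det (Tmat a b c n).
Proof.
rewrite (expand_det_row _ ord_max) big_ord_recr /= big_ord_recr /=.
rewrite big1 ?add0r; last first.
  move=> i _; rewrite mxE /=.
  have := ltn_ord i.
  case: eqP => [/= ? | _]; first lia.
  case: eqP => [/= ? | _]; first lia.
  case: eqP => [/= ? | _]; first lia.
  by rewrite mul0r.
have T1 : Tmat a b c n.+2 ord_max ord_max = per a n.+2 by rewrite mxE eqxx.
have T2 : Tmat a b c n.+2 ord_max (widen_ord (leqnSn n.+1) ord_max) = per c n.+1.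
  rewrite mxE /=.
  case: eqP => [/= ? | _]; first lia.
  case: eqP => [/= ? | _]; first lia.
  by rewrite eqxx.
have C1 : cofactor (Tmat a b c n.+2) ord_max ord_max = \det (Tmat a b c n.+1).
  rewrite /cofactor /= addnn -mul2n exprM sqrrN !expr1n mul1r; congr (\det _).
  by apply/matrixP => i j; rewrite !mxE !val_lift_max.
have C2 : cofactor (Tmat a b c n.+2) ord_max (widen_ord (leqnSn n.+1) ord_max)
          = - (per b n.+1 * \det (Tmat a b c n)).
  rewrite /cofactor /= addSn addnn -mul2n exprS exprM sqrrN !expr1n mulr1 mulN1r.
  congr (- _).
  rewrite (expand_det_col _ ord_max) big_ord_recr /= big1 ?add0r; last first.
    move=> i _; rewrite !mxE /= /bump leqnn add1n.
    have := ltn_ord i; rewrite (_ : (n.+1 <= i)%N = false) ?add0n; last by have := ltn_ord i; lia.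
    case: eqP => [/= ? | _]; first lia.
    case: eqP => [/= ? | _]; first lia.
    case: eqP => [/= ? | _]; first lia.
    by rewrite mul0r.
  rewrite !mxE /= (_ : bump n.+1 n = n); last by rewrite /bump ltnn.
  rewrite (_ : bump n n = n.+1); last by rewrite /bump leqnn.
  case: eqP => [/= ? | _]; first lia.
  rewrite eqxx; congr (_ * _).
  rewrite /cofactor /= addnn -mul2n exprM sqrrN !expr1n mul1r; congr (\det _).
  apply/matrixP => i j; rewrite !mxE /=.
  have B : forall (m : nat) (u : 'I_n), (n <= m)%N -> bump m u = u.
    by move=> m u Hm; rewrite /bump (_ : (m <= u)%N = false) ?add0n //; have := ltn_ord u; lia.
  by rewrite !B //; apply: leqW.
rewrite T1 T2 C1 C2; ring.
Qed.

End Det.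
Unset Implicit Arguments.

Theorem theorem5p4 (K : comPzRingType) (k n : nat) (a b c : k.-tuple K) :
  (0 < k)%N -> (k < n)%N ->
  let dd := fun i => per b i * per c i in
  let md := fun i => - dd i in
  let x := per a in
  let d := \prod_(1 <= i < k.+1) dd i in
  let U := fun i => Ucheb i (pi_ x md k k) d in
  let m := (n %/ k)%N in
  let r := (n %% k)%N in
  [/\ \det (Tmat a b c n)
        = U m * alpha x md k (k + r) - d * U m.-1 * alpha x md k r,
      \det (Tmat a b c n)
        = U m.+1 * alpha x md k r
          + dd k * (\prod_(1 <= i < r.+1) dd i) * U m
            * alpham1 (shiftn x r.+1) (shiftn md r.+1) k (k - r - 1)
    & r = k.-1 ->
      \det (Tmat a b c n) = U m.+1 * \det (Tmat a b c k.-1)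
      /\ U m.+1 * \det (Tmat a b c k.-1) = U m.+1 * alpha x md k k.-1].
Proof.
move=> Hk Hkn dd md x d U m r.
pose X := fun j => x j.+1.
pose Y := fun j => if j == 0%N then md k else md j.
pose A := sol X Y 0 1.
pose B := sol X Y 1 0.
have HY : forall j, (0 < j)%N -> Y j = md j by move=> [|j].
have HXp : forall j, X (j + k)%N = X j.
  by move=> j; rewrite /X /x -addSn per_period.
have HYp : forall j, Y (j + k)%N = Y j.
  move=> [|j]; first by rewrite /Y add0n (_ : (k == 0%N) = false) //; lia.
  by rewrite /Y addSn /= /md /dd -addSn !per_period.
have Hdet : forall j, \det (Tmat a b c j) = A j.+1.
  move=> j.
  suff: \det (Tmat a b c j) = A j.+1 /\ \det (Tmat a b c j.+1) = A j.+2 by case.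
  elim: j => [|j [IH1 IH2]].
    by rewrite det_T0 det_T1 /A /sol /= /X /x mulr0 addr0 mulr1.
  split=> //; rewrite det_Trec IH1 IH2 /A (sol_isSol X Y 0 1 j.+1) HY // /X /x /md /dd; ring.
have Hal : forall j, alpha x md k j = A j.+1.
  by move=> j; rewrite /alpha (alpha_link (X:=X) (Y:=Y)).
have Hpi : pi_ x md k k = A k.+1 + B k.
  by rewrite /pi_ Hal (beta_link (X:=X) (Y:=Y)).
have Cas_dd : forall j, Cas X Y j.+1 = dd k * \prod_(1 <= i < j.+1) dd i.
  move=> j; rewrite Cas_prod big_nat_recl // /Y eqxx /md opprK; congr (_ * _).
  rewrite big_add1 /=; apply: eq_big_nat => i _; by rewrite /md opprK.
have Hd : d = Cas X Y k.
  have [k' ek] : exists k', k = k'.+1 by exists k.-1; lia.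
  by rewrite /d ek Cas_dd big_nat_recr // mulrC ek.

have Ht : pi_ x md k k = A k.+1 + B k by [].
have Hm : (0 < m)%N by rewrite /m divn_gt0 //; lia.
have En : n = (m * k + r)%N by rewrite /m /r -divn_eq.
pose s := fun j => A (j * k + r).+1.
have Hs : forall j, s j.+2 = pi_ x md k k * s j.+1 - d * s j.
  move=> j; rewrite /s Hpi Hd.
  have e1 : ((j.+2 * k + r).+1 = (j * k + r).+1 + k + k)%N by lia.
  have e2 : ((j.+1 * k + r).+1 = (j * k + r).+1 + k)%N by lia.
  by rewrite /A /B e1 e2 (main_id HXp HYp).
have Hch := cheb Hs.
have [m' em] : exists m', m = m'.+1 by exists m.-1; lia.
have Hdetn : \det (Tmat a b c n) = s m by rewrite Hdet En.
have S1 : s 1%N = alpha x md k (k + r) by rewrite /s Hal mul1n.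
have S0 : s 0%N = alpha x md k r by rewrite /s Hal mul0n.
have F1 : \det (Tmat a b c n) = U m * alpha x md k (k + r) - d * U m.-1 * alpha x md k r.
  by rewrite Hdetn em Hch S1 S0 /U.
have Hrk : (r < k)%N by rewrite /r ltn_mod.
have Hal1 : alpham1 (shiftn x r.+1) (shiftn md r.+1) k (k - r - 1) =
   sol (fun j => X (r.+1 + j)%N) (fun j => Y (r.+1 + j)%N) 0 1 (k - r - 1).
  rewrite /alpham1 (alpha_link (X := fun j => X (r.+1 + j)%N) (Y := fun j => Y (r.+1 + j)%N)) //.
  by move=> j; rewrite /X /shiftn addnS.
have W : s 1%N - pi_ x md k k * s 0%N =
         dd k * (\prod_(1 <= i < r.+1) dd i) * alpham1 (shiftn x r.+1) (shiftn md r.+1) k (k - r - 1).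
  rewrite Hal1 -Cas_dd -(Wron X Y r.+1 (k - r - 1)) (_ : (r.+1 + (k - r - 1) = k)%N); last lia.
  rewrite /s mul1n Hpi (_ : ((k + r).+1 = r.+1 + k)%N); last lia.
  rewrite /A /B (shiftk_A HXp HYp); ring.
have F2 : \det (Tmat a b c n) = U m.+1 * alpha x md k r +
     dd k * (\prod_(1 <= i < r.+1) dd i) * U m * alpham1 (shiftn x r.+1) (shiftn md r.+1) k (k - r - 1).
  rewrite F1 -S1 -S0 (_ : dd k * \prod_(1 <= i < r.+1) dd i * U m *
      alpham1 (shiftn x r.+1) (shiftn md r.+1) k (k - r - 1) =
      U m * (dd k * (\prod_(1 <= i < r.+1) dd i) * alpham1 (shiftn x r.+1) (shiftn md r.+1) k (k - r - 1))); last ring.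
  rewrite -W /U em Ucheb_rec2 /=; ring.
split => // Er.
have E0 : (k - r - 1 = 0)%N by lia.
have Z : alpham1 (shiftn x r.+1) (shiftn md r.+1) k (k - r - 1) = 0 by rewrite E0.
rewrite F2 Z mulr0 addr0 -Er Hdet Hal; split=> //.
Qed.
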